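(* Let $\Delta\ge\omega\ge u+1\ge2$ and $p\ge1$ be integers, let $H$ be a graph containing $K_u$ as a subgraph, and let $L=\mathrm{T}_\omega\big(\Delta+u\lfloor\frac{\Delta}{\omega-u}\rfloor\big)$. Then \[\mathcal{N}\Big(H,\Big\lfloor\frac{p}{k^u(L)}\Big\rfloor L\Big)\le\mathrm{ex}_u(p,H,\{K_u\vee I_{\Delta+1},K_{\omega+1}\}).\]
   Context: All graphs are finite and simple. $\mathcal{N}(H,G)$ is the number of (not necessarily induced) subgraphs of $G$ isomorphic to $H$; $k^u(G)=\mathcal{N}(K_u,G)$. $aL$ is the disjoint union of $a$ copies of $L$. $\mathrm{T}_r(n)$ is the Turán graph (complete $r$-partite on $n$ vertices with part sizes $\lfloor n/r\rfloor$ or $\lceil n/r\rceil$). $K_u\vee I_{\Delta+1}$ is the complete split graph: a $u$-clique, an independent set of $\Delta+1$ vertices, and all edges between them. $\mathrm{ex}_u(p,H,\mathcal{F})\in[0,\infty]$ is the supremum of $\mathcal{N}(H,G)$ over all graphs $G$ with $k^u(G)=p$ having no subgraph isomorphic to a member of $\mathcal{F}$. *)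

(* Defs.v *)
From HB Require Import structures.
From mathcomp Require Import all_boot all_order all_algebra.
From mathcomp Require Import classical_sets reals ereal.
Set Implicit Arguments. Unset Strict Implicit. Unset Printing Implicit Defensive.

Record sgraph := SGraph {
  vert : finType;
  adj : rel vert;
  adj_sym : symmetric adj;
  adj_irr : irreflexive adj }.

Definition gedges (G : sgraph) : {set {set vert G}} :=
  [set [set xy.1; xy.2] | xy : (vert G * vert G)%type & adj xy.1 xy.2].

(* (S, E) is a subgraph of G (vertex set S, edge set E) isomorphic to H. *)
Definition is_copy (H G : sgraph) (S : {set vert G}) (E : {set {set vert G}}) : bool :=
  [&& E \subset gedges G, [forall e in E, e \subset S] &
   [exists f : {ffun vert H -> vert G},
     [&& injectiveb f, S == f @: setT &
         [forall x, forall y, adj x y == ([set f x; f y] \in E)]]]].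

Definition Ncount (H G : sgraph) : nat :=
  #|[set SE : {set vert G} * {set {set vert G}} | is_copy H SE.1 SE.2]|.

Definition has_subgraph (F G : sgraph) : Prop :=
  exists f : vert F -> vert G, injective f /\ forall x y, adj x y -> adj (f x) (f y).

Definition Kadj n : rel 'I_n := fun i j => i != j.
Lemma Kadj_sym n : symmetric (@Kadj n).
Proof. by move=> i j; rewrite /Kadj eq_sym. Qed.
Lemma Kadj_irr n : irreflexive (@Kadj n).
Proof. by move=> i; rewrite /Kadj eqxx. Qed.
Definition Kcomp n : sgraph := SGraph (@Kadj_sym n) (@Kadj_irr n).

Definition kcount (u : nat) (G : sgraph) : nat := Ncount (Kcomp u) G.

(* Turan graph T_r(n): vertex i is in part (i mod r); parts have sizes
   floor(n/r) or ceil(n/r). *)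
Definition Tadj r n : rel 'I_n := fun i j => (i %% r != j %% r)%N.
Lemma Tadj_sym r n : symmetric (@Tadj r n).
Proof. by move=> i j; rewrite /Tadj eq_sym. Qed.
Lemma Tadj_irr r n : irreflexive (@Tadj r n).
Proof. by move=> i; rewrite /Tadj eqxx. Qed.
Definition Turan r n : sgraph := SGraph (@Tadj_sym r n) (@Tadj_irr r n).

(* Complete split graph K_u \/ I_m: vertices 0..u-1 form the clique,
   vertices u..u+m-1 the independent set. *)
Definition Sadj u m : rel 'I_(u + m) := fun i j => (i != j) && ((i < u) || (j < u))%N.
Lemma Sadj_sym u m : symmetric (@Sadj u m).
Proof. by move=> i j; rewrite /Sadj eq_sym orbC. Qed.
Lemma Sadj_irr u m : irreflexive (@Sadj u m).
Proof. by move=> i; rewrite /Sadj eqxx. Qed.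
Definition Ksplit u m : sgraph := SGraph (@Sadj_sym u m) (@Sadj_irr u m).

Definition Dadj a (L : sgraph) : rel ('I_a * vert L)%type :=
  fun v w => (v.1 == w.1) && adj v.2 w.2.
Lemma Dadj_sym a L : symmetric (@Dadj a L).
Proof. by move=> v w; rewrite /Dadj eq_sym adj_sym. Qed.
Lemma Dadj_irr a L : irreflexive (@Dadj a L).
Proof. by move=> v; rewrite /Dadj adj_irr andbF. Qed.
Definition dunion a (L : sgraph) : sgraph := SGraph (@Dadj_sym a L) (@Dadj_irr a L).

(* ex_u(p, H, F) in [0, +oo]: supremum of N(H,G) over graphs G with k^u(G) = p
   containing no member of F; the value 0 is included so that the supremum of an
   empty family is 0 (as a supremum in [0, oo]). *)
Definition ex_u (R : realType) (u p : nat) (H : sgraph) (F : sgraph -> Prop) : \bar R :=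
  ereal_sup ([set 0%E] `|`
    [set x | exists G : sgraph, [/\ kcount u G = p,
        (forall Fm, F Fm -> ~ has_subgraph Fm G) & x = ((Ncount H G)%:R)%:E]]).

Arguments Kcomp : clear implicits.
Arguments Turan : clear implicits.
Arguments Ksplit : clear implicits.
Arguments dunion : clear implicits.

(* Main.v *)
Require Import Defs.
From HB Require Import structures.
From mathcomp Require Import all_boot all_order all_algebra.
From mathcomp Require Import classical_sets reals ereal.
Set Implicit Arguments. Unset Strict Implicit. Unset Printing Implicit Defensive.

Definition cliques u (G : sgraph) : {set {set vert G}} :=
  [set S : {set vert G} | (#|S| == u) && [forall x in S, forall y in S, (x != y) ==> adj x y]].

Definition Eset (G : sgraph) (S : {set vert G}) : {set {set vert G}} :=
  [set e : {set vert G} | (e \subset S) && (#|e| == 2)].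

Lemma set2_adj (G : sgraph) (x y a b : vert G) :
  x != y -> [set x; y] = [set a; b] -> adj a b -> adj x y.
Proof.
move=> nxy E ab.
have xi : x \in [set a; b] by rewrite -E set21.
have yi : y \in [set a; b] by rewrite -E set22.
move: nxy xi yi; rewrite !inE => nxy /orP[]/eqP ex /orP[]/eqP ey; subst x y.
- by rewrite eqxx in nxy.
- done.
- by rewrite adj_sym.
- by rewrite eqxx in nxy.
Qed.

Lemma imsetTc (T T' : finType) (f : T -> T') :
  [set f x | x in [set: T]%classic] = [set f x | x : T].
Proof. by apply/finset.setP=> y; apply/imsetP/imsetP; case=> x _ ->; exists x; rewrite ?in_setT. Qed.

Lemma mem_gedges (G : sgraph) (a b : vert G) : adj a b -> [set a; b] \in gedges G.
Proof. by move=> ab; apply/imsetP; exists (a, b); rewrite ?inE. Qed.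

Lemma gedgesP (G : sgraph) e : e \in gedges G -> exists a b, adj a b /\ e = [set a; b].
Proof. by case/imsetP=> -[a b]; rewrite inE /= => ab ->; exists a, b. Qed.

Lemma copyK u (G : sgraph) (S : {set vert G}) (E : {set {set vert G}}) : 0 < u ->
  is_copy (Kcomp u) S E = (S \in cliques u G) && (E == @Eset G S).
Proof.
move=> u0; apply/idP/idP.
- case/and3P=> EG ES /existsP[f /and3P[/injectiveP fi /eqP SE /forallP fE]].
  have fE' : forall i j, (i != j) = ([set f i; f j] \in E).
    by move=> i j; move/forallP: (fE i) => /(_ j) /eqP.
  apply/andP; split.
    rewrite inE SE imsetTc card_imset // card_ord eqxx /=.
    apply/forallP=> x; apply/implyP=> /imsetP[i _ ->].
    apply/forallP=> y; apply/implyP=> /imsetP[j _ ->].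
    apply/implyP=> nij.
    have : i != j by apply: contraNneq nij => ->.
    rewrite fE' => /(fintype.subsetP EG) /gedgesP [a [b [ab e]]].
    exact: set2_adj nij e ab.
  apply/eqP/finset.setP=> e; rewrite inE; apply/idP/idP.
    move=> eE; rewrite (forall_inP ES) //=.
    have /gedgesP[a [b [ab ->]]] := fintype.subsetP EG e eE.
    have nab : a != b by apply: contraTneq ab => ->; rewrite adj_irr.
    by rewrite cards2 nab.
  case/andP=> eS /cards2P[a [b [nab ee]]].
  have : a \in S by apply: (fintype.subsetP eS); rewrite ee set21.
  have : b \in S by apply: (fintype.subsetP eS); rewrite ee set22.
  rewrite SE => /imsetP[j _ bj] /imsetP[i _ ai].
  by rewrite ee ai bj -fE'; apply: contraNneq nab; rewrite ai bj => ->.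
- case/andP; rewrite inE => /andP[/eqP cS /forallP cl] /eqP ->.
  have [x0 _] : exists x0, x0 \in S.
    by apply/set0Pn; rewrite -card_gt0 cS.
  have sz : size (enum S) = u by rewrite -cardE.
  have fi : injective (fun i : 'I_u => nth x0 (enum S) i).
    move=> i j /eqP; rewrite nth_uniq ?sz ?ltn_ord ?enum_uniq //.
    by move/eqP/val_inj.
  have fS : forall i : 'I_u, nth x0 (enum S) i \in S.
    by move=> i; rewrite -mem_enum mem_nth // sz ltn_ord.
  have ffi : injective ([ffun i : 'I_u => nth x0 (enum S) i] : {ffun 'I_u -> vert G}).
    by move=> i j; rewrite !ffunE => /fi.
  apply/and3P; split.
  + apply/fintype.subsetP=> e; rewrite inE => /andP[eS /cards2P[a [b [nab ee]]]].
    rewrite ee; apply: mem_gedges.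
    have := cl a; move/implyP; rewrite (fintype.subsetP eS) ?ee ?set21 // => /(_ isT).
    move/forallP/(_ b)/implyP; rewrite (fintype.subsetP eS) ?ee ?set22 // => /(_ isT).
    by move/implyP; apply.
  + by apply/forall_inP=> e; rewrite inE => /andP[].
  + apply/existsP; exists [ffun i : 'I_u => nth x0 (enum S) i].
    apply/and3P; split.
    * by apply/injectiveP.
    * rewrite eq_sym eqEcard; apply/andP; split.
        by apply/fintype.subsetP=> y /imsetP[i _ ->]; rewrite ffunE fS.
      rewrite imsetTc card_imset; first by rewrite card_ord cS.
      exact: ffi.
    * apply/forallP=> i; apply/forallP=> j; rewrite !ffunE inE.
      rewrite cards2 eqSS; apply/eqP; rewrite /= /Kadj.
      rewrite (inj_eq fi).
      have -> : [set nth x0 (enum S) i; nth x0 (enum S) j] \subset S.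
        by apply/fintype.subsetP=> y; rewrite !inE => /orP[]/eqP->; apply: fS.
      by case: (i != j).
Qed.

Lemma kcountE u (G : sgraph) : 0 < u -> kcount u G = #|cliques u G|.
Proof.
move=> u0; rewrite /kcount /Ncount.
set X := [set SE | _].
have inj : {in X &, injective (fun SE : {set vert G} * {set {set vert G}} => SE.1)}.
  move=> [S E] [S' E']; rewrite !inE /= !copyK // => /andP[_ /eqP->] /andP[_ /eqP->] ->.
  done.
rewrite -(card_in_imset inj).
suff -> : [set SE.1 | SE in X] = cliques u G by [].
apply/finset.setP=> S; apply/imsetP/idP.
  by case=> -[S' E]; rewrite inE copyK // => /andP[? _] ->.
by move=> Sc; exists (S, Eset S); rewrite // inE copyK // Sc eqxx.
Qed.

Lemma clique_adj u (G : sgraph) (S : {set vert G}) x y :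
  S \in cliques u G -> x \in S -> y \in S -> x != y -> adj x y.
Proof.
rewrite inE => /andP[_ /forallP cl] xS yS nxy.
by move/implyP: (cl x) => /(_ xS) /forallP /(_ y) /implyP /(_ yS) /implyP; apply.
Qed.

Lemma clique_card u (G : sgraph) (S : {set vert G}) : S \in cliques u G -> #|S| = u.
Proof. by rewrite inE => /andP[/eqP]. Qed.

Lemma cliquesI u (G : sgraph) (S : {set vert G}) : #|S| = u ->
  (forall x y, x \in S -> y \in S -> x != y -> adj x y) -> S \in cliques u G.
Proof.
move=> cS cl; rewrite inE cS eqxx /=.
apply/forall_inP=> x xS; apply/forall_inP=> y yS; apply/implyP; exact: cl.
Qed.

Lemma card_set_sum (T : finType) (A : {set T}) (P : pred T) :
  #|[set S in A | P S]| = \sum_(S in A) (P S : nat).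
Proof.
rewrite -sum1_card.
transitivity (\sum_(S in A | P S) 1); first by apply: eq_bigl => S; rewrite inE.
by rewrite big_mkcondr /=; apply: eq_bigr => S _; case: (P S).
Qed.

Lemma cliques_part u (G : sgraph) (I : finType) (c : vert G -> I) : 0 < u ->
  (forall x y, adj x y -> c x = c y) ->
  #|cliques u G| = \sum_(i : I) #|[set S in cliques u G | [forall x in S, c x == i]]|.
Proof.
move=> u0 hc.
rewrite (eq_bigr (fun i => \sum_(S in cliques u G) ([forall x in S, c x == i] : nat)));
  last by move=> i _; rewrite card_set_sum.
rewrite exchange_big /= -sum1_card; apply: eq_bigr => S Sc.
have [x0 x0S] : exists x0, x0 \in S.
  by apply/set0Pn; rewrite -card_gt0 (clique_card Sc).
rewrite (bigD1 (c x0)) //= big1 ?addn0.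
  suff -> : [forall x in S, c x == c x0] by [].
  apply/forall_inP=> x xS.
  have [->//|nx] := eqVneq x x0.
  by rewrite (hc _ _ (clique_adj Sc xS x0S nx)).
move=> i ni; suff /negbTE -> : ~~ [forall x in S, c x == i] by [].
apply/negP=> /forall_inP /(_ x0 x0S) /eqP ci.
by rewrite ci eqxx in ni.
Qed.

Lemma cliques_comp u (G A : sgraph) (e : vert A -> vert G) (P : pred (vert G)) :
  injective e -> (forall x y, adj (e x) (e y) = adj x y) ->
  (forall v, P v -> exists x, v = e x) -> (forall x, P (e x)) ->
  #|[set S in cliques u G | [forall v in S, P v]]| = #|cliques u A|.
Proof.
move=> ei ea eP Pe.
have ii : injective (fun C : {set vert A} => e @: C) := imset_inj ei.
rewrite -(card_imset _ ii).
suff -> : [set S in cliques u G | [forall v in S, P v]] = [set e @: C | C : {set vert A} in cliques u A] by [].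
apply/finset.setP => S; rewrite inE; apply/andP/imsetP.
- case=> Sc /forall_inP SP.
  have SE : S = e @: (e @^-1: S).
    apply/finset.setP=> v; apply/idP/imsetP.
      by move=> vS; have [x xe] := eP v (SP v vS); exists x => //; rewrite inE -xe.
    by case=> x; rewrite inE => ? ->.
  exists (e @^-1: S) => //.
  apply: cliquesI.
    by rewrite -(card_imset _ ei) -SE (clique_card Sc).
  move=> x y; rewrite !inE => xS yS nxy; rewrite -ea.
  by apply: (clique_adj Sc xS yS); rewrite (inj_eq ei).
- case=> C Cc ->; split.
    apply: cliquesI; first by rewrite card_imset // (clique_card Cc).
    move=> _ _ /imsetP[x xC ->] /imsetP[y yC ->]; rewrite (inj_eq ei) ea.
    exact: clique_adj Cc xC yC.
  by apply/forall_inP=> _ /imsetP[x _ ->].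
Qed.

Lemma imset_set2 (T T' : finType) (h : T -> T') a b : h @: [set a; b] = [set h a; h b].
Proof. by rewrite imsetU1 imset_set1. Qed.

Lemma Ncount_mono (H A B : sgraph) (h : vert A -> vert B) :
  injective h -> (forall x y, adj x y -> adj (h x) (h y)) -> Ncount H A <= Ncount H B.
Proof.
move=> hi ha; rewrite /Ncount.
pose Phi := fun SE : {set vert A} * {set {set vert A}} => (h @: SE.1, (fun e : {set vert A} => h @: e) @: SE.2).
have Phii : injective Phi.
  by move=> [S E] [S' E'] [/(imset_inj hi) -> /(imset_inj (imset_inj hi)) ->].
rewrite -(card_imset _ Phii); apply: subset_leq_card; apply/fintype.subsetP => _ /imsetP[[S E] + ->].
rewrite !inE => /and3P[EG ES /existsP[f /and3P[/injectiveP fi /eqP SE /forallP fE]]]; rewrite [(S, E).1]/= in SE.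
apply/and3P; split.
- apply/fintype.subsetP => _ /imsetP[e eE ->].
  have /gedgesP[a [b [ab ->]]] := fintype.subsetP EG e eE.
  by rewrite imset_set2; exact: mem_gedges (ha _ _ ab).
- apply/forall_inP => _ /imsetP[e eE ->]; apply: imsetS; exact: (forall_inP ES).
- apply/existsP; exists [ffun x => h (f x)]; apply/and3P; split.
  + by apply/injectiveP => x y; rewrite !ffunE => /hi /fi.
  + rewrite SE !imsetTc /Phi /= -imset_comp; apply/eqP/eq_imset => x; exact: (esym (ffunE (fun x0 => h (f x0)) x)).
  + apply/forallP=> x; apply/forallP=> y; rewrite !ffunE -imset_set2.
    rewrite (mem_imset _ _ (imset_inj hi)); exact: (forallP (fE x) y).
Qed.

From mathcomp Require Import zify.

Definition Gv (a r u n : nat) := {v : 'I_(a + r) * 'I_n | (v.1 < a) || (v.2 < u)}.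

Definition Gadj w a r u n : rel (Gv a r u n) :=
  fun v v' => ((val v).1 == (val v').1) && Tadj w (val v).2 (val v').2.
Lemma Gadj_sym w a r u n : symmetric (@Gadj w a r u n).
Proof. by move=> v v'; rewrite /Gadj eq_sym Tadj_sym. Qed.
Lemma Gadj_irr w a r u n : irreflexive (@Gadj w a r u n).
Proof. by move=> v; rewrite /Gadj Tadj_irr andbF. Qed.
Definition Gp w a r u n : sgraph := SGraph (@Gadj_sym w a r u n) (@Gadj_irr w a r u n).

Definition mkv a r u n (i : 'I_(a + r)) (x : 'I_n) (h : (i < a) || (x < u)) : Gv a r u n :=
  exist _ (i, x) h.

Lemma orbTl (b c : bool) : b -> b || c. Proof. by move=> ->. Qed.
Lemma orbTr (b c : bool) : c -> b || c. Proof. by move=> ->; rewrite orbT. Qed.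

Lemma sum_if a r K : \sum_(i < a + r) (if i < a then K else 1) = a * K + r.
Proof.
rewrite -(big_mkord xpredT (fun i => if i < a then K else 1)).
rewrite (big_cat_nat (n:=a)) //=; last exact: leq_addr.
rewrite (eq_big_nat _ _ (F2 := fun _ => K)); last by move=> i /andP[_ ->].
rewrite [X in _ + X](eq_big_nat _ _ (F2 := fun _ => 1)); last first.
  by move=> i /andP[h _]; rewrite ltnNge h.
by rewrite !sum_nat_const_nat subn0 addKn muln1.
Qed.

Lemma cliques_Kcomp u : #|cliques u (Kcomp u)| = 1.
Proof.
suff -> : cliques u (Kcomp u) = [set finset.setT] by rewrite cards1.
apply/finset.setP=> S; rewrite finset.in_set1; apply/idP/eqP.
  move/clique_card=> cS; apply/eqP; rewrite eqEcard finset.subsetT /=.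
  by rewrite cardsT card_ord cS.
move=> ->; apply: cliquesI; first by rewrite cardsT card_ord.
by move=> x y _ _.
Qed.

Lemma kcount_Gp w a r u n : 0 < u -> u < w -> u <= n ->
  #|cliques u (Gp w a r u n)| = a * #|cliques u (Turan w n)| + r.
Proof.
move=> u0 uw un.
rewrite (@cliques_part u (Gp w a r u n) _ (fun v => (val v).1)) //; last first.
  by move=> v v' /andP[/eqP].
rewrite -sum_if; apply: eq_bigr => i _.
case: ifP => ia.
- pose e := fun x : 'I_n => mkv (orbTl (x < u) ia).
  apply: (@cliques_comp u (Gp w a r u n) (Turan w n) e).
  + by move=> x y /(congr1 val) [].
  + by move=> x y; rewrite /= /Gadj /= eqxx.
  + move=> v /eqP vi; exists (val v).2; apply: val_inj => /=.
    by case: v vi => -[i' x] /= _ ->.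
  + by move=> x; rewrite /= eqxx.
- pose e := fun x : 'I_u => mkv (orbTr (i < a) (ltn_ord x : widen_ord un x < u)).
  rewrite -(cliques_Kcomp u).
  apply: (@cliques_comp u (Gp w a r u n) (Kcomp u) e).
  + by move=> x y /(congr1 val) [] /val_inj.
  + move=> x y; rewrite /= /Gadj /= eqxx /Tadj /Kadj /=.
    rewrite !modn_small ?(ltn_trans (ltn_ord _) uw) //.
  + case=> -[i' x] /= h /eqP vi; subst i'.
    have xu : x < u by move: (h); rewrite ia.
    by exists (Ordinal xu); apply: val_inj => /=; congr (_, _); exact: val_inj.
  + by move=> x; rewrite /= eqxx.
Qed.

Lemma Gp_noK w a r u n : 0 < w -> ~ has_subgraph (Kcomp w.+1) (Gp w a r u n).
Proof.
move=> w0 [f [fi fa]].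
pose g := fun k : 'I_w.+1 => Ordinal (ltn_pmod (val (f k)).2 w0).
have gi : injective g.
  move=> k k' /(congr1 val) /= e; case: (eqVneq k k') => // nk.
  by have := fa _ _ nk; rewrite /= /Gadj /Tadj e eqxx andbF.
by have := leq_card _ gi; rewrite !card_ord ltnn.
Qed.

Lemma modDM m t w : (m %% w + t * w) %% w = m %% w.
Proof. by rewrite addnC modnMDl modn_mod. Qed.

Lemma Gp_noS w a r u n D q : 0 < u -> u < w -> q * w <= n -> n <= D + u * q ->
  ~ has_subgraph (Ksplit u D.+1) (Gp w a r u n).
Proof.
move=> u0 uw qn nD [f [fi fa]].
have w0 : 0 < w by apply: leq_ltn_trans uw.
pose cl := fun i : 'I_u => (lshift D.+1 i : vert (Ksplit u D.+1)).
pose ind := fun j : 'I_D.+1 => (rshift u j : vert (Ksplit u D.+1)).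
pose g := fun k => (val (f k)).2.
have adjcc : forall i i', i != i' -> adj (cl i) (cl i').
  move=> i i' ni; rewrite /= /Sadj /= ltn_ord andbT.
  by apply: contraNneq ni => /(congr1 val) /= e; apply/eqP/val_inj.
have adjci : forall i j, adj (cl i) (ind j).
  move=> i j; rewrite /= /Sadj /= ltn_ord andbT.
  by apply/eqP => /(congr1 val) /= e; have := ltn_ord i; lia.
have T : forall k k', adj k k' -> (val (f k)).1 = (val (f k')).1 /\ g k %% w != g k' %% w.
  by move=> k k' /fa /andP[/eqP -> ]; rewrite /Tadj.
pose i0 := Ordinal u0.
have F3 : forall j, (val (f (ind j))).1 = (val (f (cl i0))).1.
  by move=> j; case: (T _ _ (adjci i0 j)).
have ginj : forall j j', g (ind j) = g (ind j') -> j = j'.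
  move=> j j' e; apply: (@rshift_inj u); apply: fi; apply: val_inj.
  rewrite [val (f (ind j))]surjective_pairing [val (f (ind j'))]surjective_pairing.
  by rewrite !F3; congr (_, _).
have pf : forall i (t : 'I_q), g (cl i) %% w + t * w < n.
  move=> i t; have := ltn_pmod (g (cl i)) w0; have := leq_mul (ltn_ord t) (leqnn w).
  nia.
pose Phi := fun s : ('I_D.+1 + 'I_u * 'I_q)%type =>
  match s with inl j => g (ind j) | inr it => Ordinal (pf it.1 it.2) end.
have Phii : injective Phi.
  case=> [j|[i t]] [j'|[i' t']] /=.
  - by move/ginj=> ->.
  - move/(congr1 val) => /= /(congr1 (modn^~ w)); rewrite modDM => e.
    by case: (T _ _ (adjci i' j)) => _; rewrite e eqxx.
  - move/(congr1 val) => /= /(congr1 (modn^~ w)); rewrite modDM => e.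
    by case: (T _ _ (adjci i j')) => _; rewrite e eqxx.
  - move/(congr1 val) => /= e.
    have ei : g (cl i) %% w = g (cl i') %% w.
      by have := congr1 (modn^~ w) e; rewrite /= !modDM.
    have ii : i = i'.
      apply/eqP; apply: contraTT isT => ni.
      by case: (T _ _ (adjcc _ _ ni)) => _; rewrite ei eqxx.
    subst i'; move: e => /addnI /eqP; rewrite eqn_pmul2r // => /eqP tt.
    by congr inr; congr (_, _); apply: val_inj.
have := leq_card _ Phii; rewrite card_sum card_prod !card_ord.
lia.
Qed.

Import Order.TTheory GRing.Theory Num.Theory.
Unset Implicit Arguments.

Theorem mainTheorem9 (R : realType) (Delta omega u p : nat) (H : sgraph) :
  (2 <= u.+1)%N -> (u.+1 <= omega)%N -> (omega <= Delta)%N -> (1 <= p)%N ->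
  has_subgraph (Kcomp u) H ->
  let L := Turan omega (Delta + u * (Delta %/ (omega - u)))%N in
  (((Ncount H (dunion (p %/ kcount u L) L))%:R : R)%:E <=
     ex_u R u p H (fun Fm => Fm = Ksplit u Delta.+1 \/ Fm = Kcomp omega.+1))%E.
Proof.
move=> u0 uw wD _ _; cbv zeta.
set L := Turan _ _.
set q := (Delta %/ (omega - u))%N.
set n := (Delta + u * q)%N.
set K := kcount u L.
set a := (p %/ K)%N.
set r := (p - a * K)%N.
have qw : (q * (omega - u) <= Delta)%N by apply: leq_divM.
have qn : (q * omega <= n)%N.
  have : (q * omega = q * (omega - u) + q * u)%N by rewrite -mulnDr subnK // ltnW.
  rewrite /n => ->; lia.
have un : (u <= n)%N by rewrite /n; lia.
have kG : kcount u (Gp omega a r u n) = p.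
  rewrite kcountE // kcount_Gp // ?ltnW // -kcountE //.
  by rewrite /r subnKC // /a leq_divM.
have le1 : (Ncount H (dunion a L) <= Ncount H (Gp omega a r u n))%N.
  apply: (@Ncount_mono H (dunion a L) (Gp omega a r u n) (fun v : 'I_a * 'I_n =>
     mkv (orbTl (v.2 < u) (ltn_ord v.1 : widen_ord (leq_addr r a) v.1 < a)))).
    by move=> [i x] [j y] /(congr1 val) /= [/val_inj -> ->].
  by move=> [i x] [j y] /andP[/= /eqP -> xy]; rewrite /= /Gadj /= eqxx.
apply: (@le_trans _ _ ((Ncount H (Gp omega a r u n))%:R%:E)).
  by rewrite lee_fin ler_nat.
apply: ereal_sup_ubound; right; exists (Gp omega a r u n); split => //.
move=> Fm [->|->].
  by apply: (@Gp_noS omega a r u n Delta q).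
by apply: Gp_noK; lia.
Qed.
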